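(* Let $n\ge3$ and let $G$ be a spanning subgraph of $CT_n$. Then $$\sum_{x\in\mathrm{S}_n}\sum_{i=0}^{n} e(G_x^i)\ \ge\ \sum_{w\in V(G)}\binom{d_G(w)}{2}.$$
   Context: $\mathrm{S}_n$ is the symmetric group on $\{1,\dots,n\}$; $\mathrm{supp}(x)=\{i:i^x\ne i\}$. $CT_n$ has vertex set $\mathrm{S}_n$, with $\{x,y\}$ an edge iff $yx^{-1}$ is a transposition; the support of an edge $\{u,z\}$ is $\mathrm{supp}(\{u,z\})=\mathrm{supp}(zu^{-1})$. Let $\mathscr F_0$ be the set of all transpositions of $\mathrm{S}_n$ and, for $i\in\{1,\dots,n\}$, $\mathscr F_i=\{y\in\mathscr F_0: i\in\mathrm{supp}(y)\}$. Set $\delta_0=0$ and $\delta_i=1$ for $i\ge1$. For a spanning subgraph $G$ of $CT_n$, $i\in\{0,\dots,n\}$ and $x\in\mathrm{S}_n$, the graph $G_x^i$ has vertex set $\{yx: y\in\mathscr F_i\}$, and two vertices $u,z$ of it are adjacent iff $|\mathrm{supp}(\{x,u\})\cap\mathrm{supp}(\{x,z\})|=\delta_i$ and there is a vertex $w\ne x$ such that $(u,w,z)$ is a $2$-path in $G$. $d_G(w)$ is the degree of $w$ in $G$. *)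

(* Defs.v *)
(* Points {1..n} are modelled by 'I_n (i.e. {0..n-1}),
   S_n by {perm 'I_n}.  MathComp's product (s * t) x = t (s x) is the
   right-action composition, matching the paper's i^(yx) = (i^y)^x. *)
From mathcomp Require Import all_boot all_order all_fingroup.
Set Implicit Arguments. Unset Strict Implicit. Unset Printing Implicit Defensive.
Local Open Scope group_scope.

Section CT.
Variable n : nat.
Notation Sn := {perm 'I_n}.

Definition supp (s : Sn) : {set 'I_n} := [set i | s i != i].

Definition is_transp (s : Sn) : bool :=
  [exists a : 'I_n, exists b : 'I_n, (a != b) && (s == tperm a b)].

Definition CT_adj (x y : Sn) : bool := is_transp (y * x^-1).

Definition esupp (u z : Sn) : {set 'I_n} := supp (z * u^-1).

Definition spanning_subgraph_CT (G : rel Sn) : Prop :=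
  (forall x y, G x y = G y x) /\ (forall x y, G x y -> CT_adj x y).

(* Indices i in {0,...,n}: None stands for 0, Some k for the point k. *)
Definition Fam (i : option 'I_n) : {set Sn} :=
  match i with
  | None => [set y | is_transp y]
  | Some k => [set y | is_transp y & k \in supp y]
  end.

Definition delta (i : option 'I_n) : nat := if i is Some _ then 1 else 0.

Definition Gxi_vert (i : option 'I_n) (x : Sn) : {set Sn} :=
  [set y * x | y in Fam i].

Definition two_path (G : rel Sn) (u w z : Sn) : bool :=
  [&& G u w, G w z, u != w, w != z & u != z].

Definition Gxi_adj (G : rel Sn) (i : option 'I_n) (x u z : Sn) : bool :=
  [&& u \in Gxi_vert i x, z \in Gxi_vert i x, u != z,
      #|esupp x u :&: esupp x z| == delta i &
      [exists w, (w != x) && two_path G u w z]].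

Definition e_Gxi (G : rel Sn) (i : option 'I_n) (x : Sn) : nat :=
  #|[set E : {set Sn} | [exists u, exists z, (E == [set u; z]) && Gxi_adj G i x u z]]|.

Definition deg (G : rel Sn) (w : Sn) : nat := #|[set v | G w v]|.

End CT.

(* Main.v *)
Require Import Defs.
From mathcomp Require Import all_boot all_order all_fingroup.
Set Implicit Arguments. Unset Strict Implicit. Unset Printing Implicit Defensive.

Section Aux.
Variable n : nat.
Notation Sn := {perm 'I_n}.
Local Open Scope group_scope.

Lemma transpP (s : Sn) :
  reflect (exists a b, a != b /\ s = tperm a b) (is_transp s).
Proof.
apply: (iffP existsP).
  by case=> a /existsP [b /andP [ab /eqP ->]]; exists a, b.
by case=> a [b [ab ->]]; exists a; apply/existsP; exists b; rewrite ab eqxx.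
Qed.

Lemma transp_neq1 (s : Sn) : is_transp s -> s != 1.
Proof.
case/transpP=> a [b [ab ->]]; apply/eqP => /permP /(_ a).
by rewrite tpermL perm1 => /eqP; rewrite eq_sym (negPf ab).
Qed.

Lemma transpV (s : Sn) : is_transp s -> s^-1 = s.
Proof. by case/transpP=> a [b [ab ->]]; rewrite tpermV. Qed.

Lemma transpJ (s t : Sn) : is_transp s -> is_transp (s ^ t).
Proof.
case/transpP=> a [b [ab ->]]; apply/transpP; exists (t a), (t b).
by rewrite tpermJ (inj_eq perm_inj).
Qed.

Lemma supp_tperm (a b : 'I_n) : a != b -> supp (tperm a b) = [set a; b].
Proof.
move=> ab; apply/setP => k; rewrite /supp !inE.
have [->|ka] := eqVneq k a; first by rewrite tpermL eq_sym ab.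
have [->|kb] := eqVneq k b; first by rewrite tpermR ab orbT.
by rewrite tpermD ?eqxx // eq_sym.
Qed.

Lemma supp_inter (s1 s2 : Sn) : is_transp s1 -> is_transp s2 -> s1 != s2 ->
  supp s1 :&: supp s2 != set0 -> #|supp s1 :&: supp s2| == 1%N.
Proof.
case/transpP=> a [b [ab ->]]; case/transpP=> c [d [cd ->]] ne.
rewrite (supp_tperm ab) (supp_tperm cd) => nz.
have h1 : (0 < #|[set a; b] :&: [set c; d]|)%N by rewrite card_gt0.
have h2 : #|[set a; b] :&: [set c; d]| <= 2%N.
  by apply: leq_trans (subset_leq_card (subsetIl _ _)) _; rewrite cards2 ab.
case: (ltngtP #|[set a; b] :&: [set c; d]| 1%N) => //.
  by move=> h; rewrite ltnNge h1 in h.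
move=> h3; have e2 : #|[set a; b] :&: [set c; d]| = 2%N by apply/eqP; rewrite eqn_leq h2.
have EA : [set a; b] :&: [set c; d] = [set a; b].
  by apply/eqP; rewrite eqEcard subsetIl e2 cards2 ab.
have EB : [set a; b] :&: [set c; d] = [set c; d].
  by apply/eqP; rewrite eqEcard subsetIr e2 cards2 cd.
have E : [set a; b] = [set c; d] by rewrite -EA EB.
exfalso; move/negP: ne; apply; apply/eqP.
have ha : a \in [set c; d] by rewrite -E !inE eqxx.
have hb : b \in [set c; d] by rewrite -E !inE eqxx orbT.
move: ab ha hb; rewrite !inE => ab /orP [] /eqP ea /orP [] /eqP eb;
  rewrite ea eb ?eqxx // in ab *; by rewrite tpermC.
Qed.


Lemma card_sum (T : finType) (A : {set T}) : #|A| = \sum_(t : T) (t \in A).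
Proof. by rewrite -sum1_card big_mkcond; apply: eq_bigr => t _; case: (t \in A). Qed.

Lemma count_lemma (T : finType) (X W : {set T}) : W \subset X -> (1 < #|X|)%N ->
  (#|W| <= #|[set x in X | W :\ x != set0]|)%N.
Proof.
move=> WX X2; case: (leqP #|W| 1) => hW.
  case: (posnP #|W|) => [-> //|W0].
  have /cards1P [w0 Ew] : #|W| == 1%N by rewrite eqn_leq hW W0.
  rewrite Ew cards1.
  apply: leq_trans (_ : 1 <= #|X :\ w0|)%N _.
    by move: X2; rewrite (cardsD1 w0 X); case: (w0 \in X) => /=; [rewrite add1n ltnS | rewrite add0n => /ltnW].
  apply: subset_leq_card; apply/subsetP => x; rewrite !inE => /andP [xw xX].
  rewrite xX /=; apply/set0Pn; exists w0; by rewrite !inE eq_sym xw eqxx.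
apply: leq_trans (subset_leq_card WX) _; apply: subset_leq_card.
apply/subsetP => x xX; rewrite inE xX /=; rewrite -card_gt0.
by move: hW; rewrite (cardsD1 x W); case: (x \in W) => /=; [rewrite add1n ltnS | rewrite add0n => /ltnW].
Qed.

Lemma key_x (G : rel Sn) (u z x : Sn) : u != z ->
  is_transp (u * x^-1) -> is_transp (z * x^-1) ->
  exists i, [&& u \in Gxi_vert i x, z \in Gxi_vert i x &
      #|esupp x u :&: esupp x z| == delta i].
Proof.
move=> uz t1 t2.
have ne : u * x^-1 != z * x^-1 by apply: contra uz => /eqP /mulIg ->.
have [e0|ne0] := eqVneq (supp (u * x^-1) :&: supp (z * x^-1)) set0.
  exists None; rewrite /esupp e0 cards0 eqxx andbT /Gxi_vert.
  apply/andP; split; apply/imsetP.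
    by exists (u * x^-1); [rewrite /Fam inE t1 | rewrite mulgVK].
  by exists (z * x^-1); [rewrite /Fam inE t2 | rewrite mulgVK].
case/set0Pn: (ne0) => k; rewrite inE => /andP [k1 k2].
exists (Some k); rewrite /esupp (supp_inter t1 t2 ne ne0) andbT /Gxi_vert.
apply/andP; split; apply/imsetP.
  by exists (u * x^-1); [rewrite /Fam inE t1 k1 | rewrite mulgVK].
by exists (z * x^-1); [rewrite /Fam inE t2 k2 | rewrite mulgVK].
Qed.

Lemma other_nb (u z w : Sn) : u != z ->
  is_transp (u * w^-1) -> is_transp (z * w^-1) ->
  exists2 x, x != w & is_transp (u * x^-1) && is_transp (z * x^-1).
Proof.
move=> uz t1 t2.
have hu : u = (u * w^-1) * w by rewrite mulgVK.
have hz : z = (z * w^-1) * w by rewrite mulgVK.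
move: t1 t2 hu hz; move: (u * w^-1) (z * w^-1) => a b t1 t2 hu hz.
subst u z.
exists (a * b * w).
  apply: contra uz => /eqP h.
  have ab1 : a * b = 1 by apply: (mulIg w); rewrite mul1g.
  have : a^-1 = b by apply: mulg1_eq.
  by rewrite (transpV t1) => ->.
apply/andP; split.
  have -> : a * w * (a * b * w)^-1 = (b^-1) ^ (a^-1).
    by rewrite !invMg !mulgA mulgK conjgE invgK !mulgA.
  by apply: transpJ; rewrite transpV.
have -> : b * w * (a * b * w)^-1 = a^-1.
  by rewrite !invMg !mulgA mulgK mulgV mul1g.
by rewrite transpV.
Qed.

Lemma per_E (G : rel Sn) (Gsym : forall x y, G x y = G y x)
  (GCT : forall x y, G x y -> CT_adj x y) (E : {set Sn}) :
  (\sum_(w : Sn) ((E \subset [set v | G w v]) && (#|E| == 2%N))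
   <= \sum_(x : Sn) \sum_(i : option 'I_n)
      (E \in [set E0 : {set Sn} | [exists u, exists z,
           (E0 == [set u; z]) && Gxi_adj G i x u z]]))%N.
Proof.
have Girr : forall w, G w w = false.
  move=> w; apply/negP => /GCT; rewrite /CT_adj mulgV => /transp_neq1.
  by rewrite eqxx.
case: (boolP (#|E| == 2%N)) => hE; last first.
  by rewrite big1 // => w _; case: andP => // -[_ h]; case/negP: hE.
case/cards2P: (hE) => u [z [uz EE]].
set W := [set w | G w u && G w z].
apply: (@leq_trans #|W|).
  rewrite card_sum; apply: leq_sum => w _; case: andP => // -[h _].
  by move: h; rewrite EE subUset !sub1set !inE => /andP [-> ->].
set X := [set x | is_transp (u * x^-1) && is_transp (z * x^-1)].
have WX : W \subset X.
  by apply/subsetP => w; rewrite !inE => /andP [/GCT h1 /GCT h2]; rewrite -!/(CT_adj _ _) h1 h2.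
have [W0|[w0 w0W]] : W = set0 \/ exists w, w \in W.
  by case: (set_0Vmem W) => [->|[w h]]; [left|right; exists w].
  by rewrite W0 cards0.
have X2 : (1 < #|X|)%N.
  have w0X : w0 \in X by apply: (subsetP WX).
  move: (w0X); rewrite inE => /andP [t1 t2].
  have [x' x'w /andP [t1' t2']] := other_nb uz t1 t2.
  have x'X : x' \in X by rewrite inE t1' t2'.
  apply: leq_trans (_ : #|[set w0; x']| <= #|X|)%N.
    by rewrite cards2 eq_sym x'w.
  by apply: subset_leq_card; apply/subsetP => y; rewrite in_set2 => /orP [] /eqP ->.
apply: leq_trans (count_lemma WX X2) _.
rewrite card_sum; apply: leq_sum => x _.
rewrite inE; case: (boolP ((x \in X) && (W :\ x != set0))) => //= /andP [xX /set0Pn [w]].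
rewrite !inE => /andP [wx /andP [Gwu Gwz]].
move: xX; rewrite inE => /andP [tu tz].
have [i /and3P [vu vz c]] := key_x G uz tu tz.
have hS : E \in [set E0 : {set Sn} | [exists u, exists z,
           (E0 == [set u; z]) && Gxi_adj G i x u z]].
  rewrite inE; apply/existsP; exists u; apply/existsP; exists z.
  rewrite EE eqxx /= /Gxi_adj vu vz uz c /=; apply/existsP; exists w.
  rewrite wx /two_path Gsym Gwu Gwz uz /= andbT; apply/andP; split.
    by apply/eqP => e; rewrite e Girr in Gwu.
  by apply/eqP => e; rewrite e Girr in Gwz.
by rewrite (bigD1 i) //= hS.
Qed.
End Aux.

Theorem mainTheorem7 (n : nat) (G : rel {perm 'I_n}) :
  3 <= n -> spanning_subgraph_CT G ->
  \sum_(w : {perm 'I_n}) 'C(deg G w, 2)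
    <= \sum_(x : {perm 'I_n}) \sum_(i : option 'I_n) e_Gxi G i x.
Proof.
move=> _ [Gsym GCT].
have L : forall w, 'C(deg G w, 2) = \sum_(E : {set {perm 'I_n}})
    ((E \subset [set v | G w v]) && (#|E| == 2)).
  move=> w; rewrite /deg -cards_draws card_sum; apply: eq_bigr => E _.
  by rewrite inE.
rewrite (eq_bigr _ (fun w _ => L w)) (exchange_big_dep xpredT) //=.
apply: leq_trans.
  apply: leq_sum => E _. exact: (per_E Gsym GCT E).
rewrite (exchange_big_dep xpredT) //=; apply: leq_sum => x _.
rewrite (exchange_big_dep xpredT) //=; apply: eq_leq; apply: eq_bigr => i _.
by rewrite /e_Gxi card_sum.
Qed.
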